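(* Let $k=-\frac{n}{2}(n-2)$. The map $\varphi\colon\Sigma^{2pk}E_*\to E_*\langle\det\rangle$ defined by $\varphi(x)=x\delta^k$ is an isomorphism of $F$--equivariant $E_*$--modules.
   Context: Let $p$ be an odd prime and $n=p-1$. Let $E=E_n$ be Morava $E$--theory with $E_*=\mathbb{W}[\![u_1,\dots,u_{n-1}]\!][u^{\pm1}]$, $\mathbb{W}=W(\mathbb{F}_{p^n})$, associated to the Honda formal group law of height $n$, with its action of the Morava stabilizer group $\mathbb{G}_n=\mathbb{S}_n\rtimes\mathrm{Gal}(\mathbb{F}_{p^n}/\mathbb{F}_p)$ ($\mathbb{S}_n$ the automorphism group of the Honda formal group law over $\mathbb{F}_{p^n}$). Let $\det\colon\mathbb{G}_n\to\mathbb{Z}_p^\times$ be the determinant (reduced norm) homomorphism. $E_*\langle\det\rangle$ denotes $E_*$ with the twisted action $\widehat{g}(x)=g(x)\det(g)$. Let $\omega\in\mathbb{W}$ be a primitive $(p^n-1)$--st root of unity; identifying $\mathbb{W}^\times$ with a subgroup of $\mathbb{S}_n$, let $\tau=\omega^{(p^n-1)/n^2}\in\mathbb{S}_n$, and write $\eta=\omega^{(p^n-1)/n^2}$ when viewed as an element of $\mathbb{W}\subseteq E_0$; then $\det(\tau)=\eta^{(p^n-1)/n}$. $F=\langle\zeta,\tau\rangle\cong C_p\rtimes C_{n^2}$ is a maximal finite subgroup of $\mathbb{S}_n$ with $\zeta$ of order $p$, $\tau^{-1}\zeta\tau=\zeta^e$ for $e$ a generator of $(\mathbb{Z}/p)^\times$,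 and $\det(\zeta)=1$. The element $\delta\in E_{2p}$ is the unit, invariant under $C_p=\langle\zeta\rangle$, appearing in the Hopkins--Miller computation $\widehat{H}^*(C_p,E_* )\cong\mathbb{F}_{p^n}[a,b^{\pm1},\delta^{\pm1}]/(a^2)$; it satisfies $\tau(\delta)=\eta^{-p}\delta$. *)

(* Defs.v *)
From HB Require Import structures.
From mathcomp Require Export all_boot all_order all_algebra all_fingroup.
Set Implicit Arguments.
Unset Strict Implicit.
Unset Printing Implicit Defensive.
Import GRing.Theory.
Local Open Scope ring_scope.

Definition mor_n (p : nat) : nat := p.-1.

(* k = - (n/2) (n-2)   (n is even since p is odd) *)
Definition mor_k (p : nat) : int := - ((mor_n p %/ 2 * (mor_n p - 2))%N)%:Z.

Definition mor_eta (E : nzRingType) (p : nat) (omega : E) : E :=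
  omega ^+ ((p ^ mor_n p - 1) %/ (mor_n p ^ 2))%N.

(* E_* is modelled as the commutative ring E = (+)_m E_m with homogeneous
   components [hom m] (m : int). *)
Record graded_comring (E : comUnitRingType) (hom : int -> {pred E}) : Prop := {
  hom0 : forall m, (0 : E) \in hom m;
  homD : forall m (x y : E), x \in hom m -> y \in hom m -> x + y \in hom m;
  homN : forall m (x : E), x \in hom m -> - x \in hom m;
  hom1 : (1 : E) \in hom 0;
  homM : forall m m' (x y : E), x \in hom m -> y \in hom m' -> x * y \in hom (m + m')
}.

Record graded_action (gT : finGroupType) (F : {set gT}) (E : comUnitRingType)
    (hom : int -> {pred E}) (act : gT -> {rmorphism E -> E}) : Prop := {
  act1 : forall x, act 1%g x = x;
  actM : forall g h x, g \in F -> h \in F -> act (g * h)%g x = act g (act h x);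
  act_hom : forall g m x, g \in F -> x \in hom m -> act g x \in hom m
}.

(* The twisted action of E_*<det> : g^(x) = g(x) det(g). *)
Definition twisted_act (gT : finGroupType) (E : comUnitRingType)
    (act : gT -> {rmorphism E -> E}) (detE : gT -> E) (g : gT) (x : E) : E :=
  act g x * detE g.

Definition phi_delta (E : comUnitRingType) (delta : E) (k : int) (x : E) : E :=
  x * delta ^ k.

(* Main.v *)
Require Import Defs.
Import GRing.Theory.
From mathcomp Require Import zify ring lra.

Lemma binexp n j : exists r, ((1+n)^j = 1 + j*n + 'C(j,2)*n^2 + n^3*r)%N.
Proof.
elim: j => [|j [r IH]]; first by exists 0%N; rewrite bin0n; lia.
exists ('C(j,2) + r + n * r)%N.
rewrite expnS IH binS bin1 !expnS !expn0. nia.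
Qed.

Lemma bin2x j : ('C(j,2)*2 = j*(j-1))%N.
Proof.
elim: j => [|j IH]; first by [].
rewrite binS bin1 mulnDl IH. case: j {IH} => [|j] //=. rewrite !subSS !subn0. lia.
Qed.

Lemma arith m n p : n = ((m.+1).*2)%N -> p = n.+1 ->
  ((p^n - 1) %| (p^n-1) %/ n^2 * (p * (n %/ 2 * (n-2)) + (p^n-1) %/ n))%N.
Proof.
move=> En Ep.
have [r Hr] := binexp n n.
have HC : 'C(n,2) = ((m.+1) * (m.*2.+1))%N.
  have := bin2x n. rewrite En. lia.
set Q := (1 + 'C(n,2) + n*r)%N.
have HM : (p^n - 1 = n^2 * Q)%N.
  rewrite Ep -add1n Hr /Q. rewrite En. lia.
have n0 : (0 < n)%N by rewrite En; lia.
rewrite HM mulKn ?expn_gt0 ?n0 // (_ : n^2 * Q = n * (n * Q))%N; last by ring.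
rewrite mulKn // (_ : n %/ 2 = m.+1)%N; last by rewrite En; lia.
apply/dvdnP; exists (m.*2.+1 + r)%N.
have E2 : (p * (m.+1 * (n - 2)) + n * Q = (m.*2.+1 + r) * n^2)%N.
  rewrite /Q HC Ep En. nia.
rewrite E2. lia.
Qed.

Local Open Scope ring_scope.

Theorem lemma4p16
  (p : nat) (p_prime : prime p) (p_odd : odd p)
  (* E_* as a graded commutative ring *)
  (E : comUnitRingType) (hom : int -> {pred E}) (E_graded : graded_comring hom)
  (* the maximal finite subgroup F = <zeta, tau> = C_p x| C_{n^2} *)
  (gT : finGroupType) (F : {group gT}) (zeta tau : gT) (e : nat)
  (F_gen : F :=: <<[set zeta; tau]>>%g)
  (zeta_order : #[zeta]%g = p) (tau_order : #[tau]%g = (mor_n p ^ 2)%N)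
  (e_gen : (mor_n p).-primitive_root (e%:R : 'F_p))
  (tau_conj : (zeta ^ tau)%g = (zeta ^+ e)%g)
  (* the action of F (restricted from G_n) on E_* *)
  (act : gT -> {rmorphism E -> E}) (act_ok : graded_action F hom act)
  (* the determinant, with values in Z_p^x (inside W, inside E_0) *)
  (detE : gT -> E)
  (det_hom : forall g, g \in F -> detE g \in hom 0)
  (det_mul : forall g h, g \in F -> h \in F -> detE (g * h)%g = detE g * detE h)
  (det_fix : forall g h, g \in F -> h \in F -> act g (detE h) = detE h)
  (* omega primitive (p^n-1)-st root of unity in W, eta = omega^((p^n-1)/n^2) *)
  (omega : E) (omega_hom : omega \in hom 0)
  (omega_prim : (p ^ mor_n p - 1)%N.-primitive_root omega)
  (det_zeta : detE zeta = 1)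
  (det_tau : detE tau = mor_eta p omega ^+ ((p ^ mor_n p - 1) %/ mor_n p)%N)
  (* the unit delta in E_{2p} *)
  (delta : E) (delta_hom : delta \in hom (2 * p)%:Z)
  (delta_unit : delta \is a GRing.unit)
  (delta_inv_hom : delta^-1 \in hom (- (2 * p)%:Z))
  (delta_zeta : act zeta delta = delta)
  (delta_tau : act tau delta = (mor_eta p omega ^+ p)^-1 * delta) :
  let phi := phi_delta delta (mor_k p) in
  (* E_*-linear *)
  (forall a x y, phi (a * x + y) = a * phi x + phi y) /\
  (* graded: Sigma^{2pk} E_* in degree m is E_{m - 2pk} *)
  (forall (m : int) x, x \in hom (m - (2 * p)%:Z * mor_k p) -> phi x \in hom m) /\
  (forall (m : int) y, y \in hom m ->
      exists2 x, x \in hom (m - (2 * p)%:Z * mor_k p) & phi x = y) /\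
  (* bijective *)
  bijective phi /\
  (* F-equivariant: phi(g x) = g^(phi x) in E_*<det> *)
  (forall g x, g \in F -> phi (act g x) = twisted_act act detE g (phi x)).
Proof.
move=> phi.
have [m0 Hm] : exists m0, mor_n p = ((m0.+1).*2)%N.
  exists (p./2).-1. have := odd_double_half p. have := prime_gt1 p_prime.
  rewrite p_odd /mor_n. lia.
have [h0 hD hN h1 hM] := E_graded.
have [a1 aM ahom] := act_ok.
set N := (mor_n p %/ 2 * (mor_n p - 2))%N.
have Ek : mor_k p = - (N%:Z) by [].
set D := delta ^+ N.
have Du : D \is a GRing.unit by rewrite unitrX.
have phiE x : phi x = x * D^-1 by rewrite /phi /phi_delta Ek -exprnN.
have homX (x : E) (a : int) j : x \in hom a -> x ^+ j \in hom (a * j%:Z).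
  move=> hx; elim: j => [|j IH]; first by rewrite expr0 mulr0.
  rewrite exprS (_ : a * j.+1%:Z = a + a * j%:Z); first exact: hM.
  by rewrite -addn1 PoszD mulrDr mulr1 addrC.
have Dhom : D \in hom ((2 * p)%:Z * N%:Z).
  by have := homX _ _ N delta_hom.
have DVhom : D^-1 \in hom (- (2 * p)%:Z * N%:Z).
  by rewrite /D -exprVn; exact: homX.
split; first by move=> a x y; rewrite !phiE mulrDl mulrA.
split.
  move=> m x hx; rewrite phiE.
  have := hM _ _ _ _ hx DVhom.
  by rewrite Ek (_ : _ + _ = m) //; ring.
split.
  move=> m y hy; exists (y * D); last by rewrite phiE mulrK.
  have := hM _ _ _ _ hy Dhom.
  by rewrite Ek (_ : _ + _ = m - (2 * p)%:Z * - N%:Z) //; ring.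
split.
  by exists (fun x => x * D) => x; rewrite phiE ?mulrK ?divrK.
have zF : zeta \in F by rewrite F_gen mem_gen // !inE eqxx.
have tF : tau \in F by rewrite F_gen mem_gen // !inE eqxx orbT.
have det1 : detE 1%g = 1.
  have Hj j : detE (zeta ^+ j.+1)%g = 1.
    elim: j => [|j IH]; first by rewrite expg1.
    by rewrite expgS det_mul ?groupX // IH det_zeta mulr1.
  by have := Hj p.-1; rewrite prednK ?prime_gt0 // -zeta_order expg_order.
set P := fun g => act g D^-1 * detE g == D^-1.
have key : forall g, g \in F -> P g.
  pose H := [set g in F | P g].
  have gH : group_set H.
    apply/group_setP; split.
      by rewrite /H inE group1 /P /= a1 det1 mulr1.
    move=> g h; rewrite /H !inE => /andP[gF /eqP Pg] /andP[hF /eqP Ph].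
    rewrite groupM //=; apply/eqP.
    rewrite aM // det_mul //; apply: etrans Pg.
    rewrite -{2}Ph rmorphM /= det_fix // -!mulrA; congr (_ * _); exact: mulrC.
  have sFH : (F \subset Group gH).
    rewrite F_gen gen_subG; apply/subsetP => x; rewrite !inE => /orP[]/eqP->.
      rewrite zF /P /= rmorphV //= rmorphXn /= delta_zeta det_zeta mulr1 //.
    rewrite tF /P /=; apply/eqP.
    rewrite rmorphV //= rmorphXn /= delta_tau det_tau.
    set M := (p ^ mor_n p - 1)%N.
    have M0 : (0 < M)%N.
      rewrite /M subn_gt0 -{1}(expn0 p) ltn_exp2l ?prime_gt1 //.
      by rewrite Hm.
    have oU : omega \is a GRing.unit.
      by rewrite -(unitrX_pos _ M0) (prim_expr_order omega_prim) unitr1.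
    set eta := mor_eta p omega.
    have eU : eta \is a GRing.unit by rewrite unitrX.
    have epU : eta ^+ p \is a GRing.unit by rewrite unitrX.
    rewrite exprMn invrM ?unitrX ?unitrV ?eU //. rewrite -mulrA -[RHS]mulr1; congr (_ * _).
    rewrite exprVn invrK -exprM -exprD /eta /mor_eta -exprM.
    have Ep : p = (mor_n p).+1 by rewrite /mor_n prednK ?prime_gt0.
    have /dvdnP[t Ht] := arith _ _ _ Hm Ep.
    move: Ht; rewrite -/M -/N => Ht. by rewrite Ht mulnC exprM (prim_expr_order omega_prim) expr1n.
  by move=> g gF; have : g \in H := subsetP sFH g gF; rewrite /H inE => /andP[_].
move=> g x gF; rewrite !phiE /twisted_act rmorphM /= -mulrA.
by have /eqP -> := key g gF.
Qed.
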